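(* Let $\mathcal N_1\in ISDnet(m,n,1)$, $c_1\ge0$, $y_0\in\mathbb{R}^n$, $t_0\in\mathbb{R}$, and $s_0<s_1<s_2<s_{\mathrm{final}}$. Then there exist $\mathcal N_2\in ISDnet(m,n,1)$ and $c_2\ge0$ such that for all $x\in\mathbb{R}^m$, $\mathrm{ODESolve}(\mathcal N_1,c_1,x,(y_0,t_0,s_0),s_{\mathrm{final}}) = \mathrm{ODESolve}(\mathcal N_2,c_2,x,(y_0,t_0,s_0),s_{\mathrm{final}})$, and the vector part $b_2$ of $\mathcal N_2$ satisfies $b_2(x,y,t,s)=0$ whenever $s\notin[s_1,s_2]$.
   Context: $ISD(D)$ is the smallest set of functions $D\to\mathbb{R}$ containing all restrictions of real polynomials and closed under pointwise $\min$, $\max$; vector/matrix maps are ISD if all entries are. $ISDnet(m,n,1) := ISD(\mathbb{R}^m\times\mathbb{R}^{n+1}\times\mathbb{R},\ \mathbb{R}^{(n+1)\times(n+1)}\times\mathbb{R}^{n+1})$; for $\mathcal N_j$ in it write $\mathcal N_j(x,y,t,s)=(M_j(x,y,t,s),b_j(x,y,t,s))$ with $y\in\mathbb{R}^n,t\in\mathbb{R},s\in\mathbb{R}$. $\mathrm{clamp\text{-}sol}_c(M,b):=\mathrm{clamp}(M^{-1}b,-c,c)$ (componentwise $a_i\mapsto\min(\max(a_i,-c),c)$) if $M$ is invertible, and $0$ otherwise. $\mathrm{ODESolve}(\mathcal N,c,x,(y_0,t_0,s_0),s_{\mathrm{final}})$ denotes $(y(s_{\mathrm{final}}),t(s_{\mathrm{final}}))$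 where $(y,t)$ is the exact solution of $\frac{d}{ds}(y,t)=\mathrm{clamp\text{-}sol}_c\big(M(x,y,t,s),b(x,y,t,s)\big)$ with $(y,t)(s_0)=(y_0,t_0)$. *)

(* Defs.v *)
From mathcomp Require Import all_boot all_order all_algebra.
From mathcomp Require Import all_classical all_reals all_analysis.
Set Implicit Arguments. Unset Strict Implicit. Unset Printing Implicit Defensive.
Import Order.TTheory GRing.Theory Num.Theory.
Import numFieldNormedType.Exports.
Local Open Scope ring_scope.
Local Open Scope classical_set_scope.

Section ISD.
Variable R : realType.

(* Polynomial functions D -> R, where D is described by coordinate functions
   coord : I -> D -> R : the smallest class containing constants and the
   coordinates, closed under + and * (= restrictions of real polynomials). *)
Inductive poly_fun (D I : Type) (coord : I -> D -> R) : (D -> R) -> Prop :=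
| PF_const (c : R) : poly_fun coord (fun _ => c)
| PF_coord (i : I) : poly_fun coord (coord i)
| PF_add f g : poly_fun coord f -> poly_fun coord g ->
    poly_fun coord (fun z => f z + g z)
| PF_mul f g : poly_fun coord f -> poly_fun coord g ->
    poly_fun coord (fun z => f z * g z).

Inductive isd_fun (D I : Type) (coord : I -> D -> R) : (D -> R) -> Prop :=
| ISD_poly f : poly_fun coord f -> isd_fun coord f
| ISD_min f g : isd_fun coord f -> isd_fun coord g ->
    isd_fun coord (fun z => Num.min (f z) (g z))
| ISD_max f g : isd_fun coord f -> isd_fun coord g ->
    isd_fun coord (fun z => Num.max (f z) (g z)).

(* The domain R^m x R^(n+1) x R: x, the state (y,t) (last entry is t), s. *)
Definition net_dom (m n : nat) := ('cV[R]_m * 'cV[R]_(n + 1) * R)%type.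

Definition net_coord (m n : nat) (k : 'I_m + 'I_(n + 1) + unit)
  (z : net_dom m n) : R :=
  match k with
  | inl (inl i) => z.1.1 i 0
  | inl (inr j) => z.1.2 j 0
  | inr _ => z.2
  end.

Definition net (m n : nat) :=
  'cV[R]_m -> 'cV[R]_(n + 1) -> R -> 'M[R]_(n + 1) * 'cV[R]_(n + 1).

Definition ISDnet (m n : nat) (N : net m n) : Prop :=
  (forall i j : 'I_(n + 1),
     isd_fun (@net_coord m n) (fun z => (N z.1.1 z.1.2 z.2).1 i j)) /\
  (forall i : 'I_(n + 1),
     isd_fun (@net_coord m n) (fun z => (N z.1.1 z.1.2 z.2).2 i 0)).

Definition clamp (c a : R) : R := Num.min (Num.max a (- c)) c.

Definition clamp_sol (k : nat) (c : R) (M : 'M[R]_k) (b : 'cV[R]_k) : 'cV[R]_k :=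
  if M \in unitmx then map_mx (clamp c) (invmx M *m b) else 0.

Definition ode_sol (m n : nat) (N : net m n) (c : R) (x : 'cV[R]_m)
  (z0 : 'cV[R]_(n + 1)) (s0 sf : R) (z : R -> 'cV[R]_(n + 1)) : Prop :=
  z s0 = z0 /\
  (forall i : 'I_(n + 1), {within [set s : R | s0 <= s <= sf], continuous (fun s : R => z s i 0)}) /\
  (forall s : R, s0 < s < sf -> forall i : 'I_(n + 1),
     is_derive s 1 (fun u => z u i 0)
       (clamp_sol c (N x (z s) s).1 (N x (z s) s).2 i 0)).

(* ODESolve(N, c, x, (z0, s0), sf): the set of values at sf of exact
   solutions (a singleton when the exact solution exists and is unique). *)
Definition ODESolve (m n : nat) (N : net m n) (c : R) (x : 'cV[R]_m)
  (z0 : 'cV[R]_(n + 1)) (s0 sf : R) : set 'cV[R]_(n + 1) :=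
  [set v | exists z, ode_sol N c x z0 s0 sf z /\ z sf = v].

End ISD.

(* Main.v *)
Require Import Defs.
From mathcomp Require Import all_boot all_order all_algebra.
From mathcomp Require Import all_classical all_reals all_analysis.
From mathcomp Require Import ring lra perm.
Import Order.TTheory GRing.Theory Num.Theory.
Import numFieldNormedType.Exports.
Local Open Scope ring_scope.
Local Open Scope classical_set_scope.

Ltac nomm x := lazymatch x with
  | context [Num.min _ _] => fail
  | context [Num.max _ _] => fail
  | _ => idtac end.
Ltac mmcase := repeat match goal with
  | |- context [Num.min ?x ?y] => nomm x; nomm y; case: (leP x y) => ?
  | |- context [Num.max ?x ?y] => nomm x; nomm y; case: (leP x y) => ? end.

Lemma poly_ext {R : realType} {D I} {coord : I -> D -> R} f {g} :
  (forall z, f z = g z) -> poly_fun coord f -> poly_fun coord g.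
Proof. by move=> e; have -> : f = g by apply: funext. Qed.

Lemma isd_ext {R : realType} {D I} {coord : I -> D -> R} {f g} :
  isd_fun coord f -> (forall z, f z = g z) -> isd_fun coord g.
Proof. by move=> H e; have <- : f = g by apply: funext. Qed.

Lemma isd_extf {R : realType} {D I} {coord : I -> D -> R} f {g} :
  (forall z, f z = g z) -> isd_fun coord f -> isd_fun coord g.
Proof. by move=> e H; apply: isd_ext H e. Qed.

Lemma isd_const {R : realType} {D I} {coord : I -> D -> R} {c} :
  isd_fun coord (fun _ => c).
Proof. by apply: ISD_poly; apply: PF_const. Qed.

Lemma isd_opp {R : realType} {D I} {coord : I -> D -> R} {f} :
  isd_fun coord f -> isd_fun coord (fun z => - f z).
Proof.
elim=> {f} [f pf|f g _ If _ Ig|f g _ If _ Ig].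
- apply: ISD_poly; apply: (poly_ext (fun z => (-1) * f z)).
    by move=> z; rewrite mulN1r.
  by apply: PF_mul => //; apply: PF_const.
- eapply (isd_ext (ISD_max If Ig)); move=> z /=.
  by case: (leP (f z) (g z)) => h; case: (leP (- f z) (- g z)) => h' //; lra.
- eapply (isd_ext (ISD_min If Ig)); move=> z /=.
  by case: (leP (f z) (g z)) => h; case: (leP (- f z) (- g z)) => h' //; lra.
Qed.

Lemma isd_add_poly {R : realType} {D I} {coord : I -> D -> R} {f g} :
  poly_fun coord f -> isd_fun coord g -> isd_fun coord (fun z => f z + g z).
Proof.
move=> pf; elim=> {g} [g pg|g h _ Ig _ Ih|g h _ Ig _ Ih].
- by apply: ISD_poly; apply: PF_add.
- eapply (isd_ext (ISD_min Ig Ih)); move=> z /=.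
  by case: (leP (g z) (h z)) => e; case: (leP (f z + g z) (f z + h z)) => e' //; lra.
- eapply (isd_ext (ISD_max Ig Ih)); move=> z /=.
  by case: (leP (g z) (h z)) => e; case: (leP (f z + g z) (f z + h z)) => e' //; lra.
Qed.

Lemma isd_add {R : realType} {D I} {coord : I -> D -> R} {f g} :
  isd_fun coord f -> isd_fun coord g -> isd_fun coord (fun z => f z + g z).
Proof.
move=> If; elim: If g => {f} [f pf|f h _ If _ Ih|f h _ If _ Ih] g Ig.
- exact: isd_add_poly.
- eapply (isd_ext (ISD_min (If g Ig) (Ih g Ig))); move=> z /=.
  by case: (leP (f z) (h z)) => e; case: (leP (f z + g z) (h z + g z)) => e' //; lra.
- eapply (isd_ext (ISD_max (If g Ig) (Ih g Ig))); move=> z /=.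
  by case: (leP (f z) (h z)) => e; case: (leP (f z + g z) (h z + g z)) => e' //; lra.
Qed.

Lemma aux {R : realType} {a b : R} : 0 <= a -> 0 <= b -> a * b <= a + b + a ^+ 3 + b ^+ 3.
Proof.
move=> ha hb.
have h1 : a ^+ 2 <= a + a ^+ 3 by nra.
have h2 : b ^+ 2 <= b + b ^+ 3 by nra.
have h3 : 2 * (a * b) <= a ^+ 2 + b ^+ 2.
  by rewrite -subr_ge0; have := sqr_ge0 (a - b); rewrite sqrrB; lra.
nra.
Qed.
Lemma posprod_id (R : realType) (x y : R) :
  Num.max x 0 * Num.max y 0 =
  Num.max 0 (Num.min (x * y) (x * y + (x + y + x ^+ 3 + y ^+ 3))).
Proof.
case: (leP x 0) => hx; case: (leP y 0) => hy.
- have := @aux _ (-x) (-y); rewrite !oppr_ge0 => /(_ hx hy) h.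
  have e : (- x) ^+ 3 = - x ^+ 3 by rewrite !exprS expr0; ring.
  have e' : (- y) ^+ 3 = - y ^+ 3 by rewrite !exprS expr0; ring.
  rewrite e e' mulrNN in h.
  rewrite mul0r; case: (leP (x*y) (x * y + (x + y + x ^+ 3 + y ^+ 3))) => h1;
   case: leP => h2 //; lra.
- rewrite mul0r; case: (leP (x*y) (x * y + (x + y + x ^+ 3 + y ^+ 3))) => h1;
   case: leP => h2 //; nra.
- rewrite mulr0; case: (leP (x*y) (x * y + (x + y + x ^+ 3 + y ^+ 3))) => h1;
   case: leP => h2 //; nra.
- have h := aux (ltW hx) (ltW hy).
  case: (leP (x*y) (x * y + (x + y + x ^+ 3 + y ^+ 3))) => h1;
   case: leP => h2 //; nra.
Qed.

Lemma isd_pp_poly {R : realType} {D I} {coord : I -> D -> R} {p q} :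
  poly_fun coord p -> poly_fun coord q ->
  isd_fun coord (fun z => Num.max (p z) 0 * Num.max (q z) 0).
Proof.
move=> pp pq.
apply: (isd_extf (fun z => Num.max 0 (Num.min (p z * q z)
   (p z * q z + (p z + q z + p z * (p z * p z) + q z * (q z * q z)))))).
  by move=> z; rewrite posprod_id !exprS expr0 !mulr1.
apply: ISD_max; first exact: isd_const.
apply: ISD_min; apply: ISD_poly; first exact: PF_mul.
apply: PF_add; first exact: PF_mul.
by repeat apply: PF_add => //; repeat apply: PF_mul.
Qed.

Lemma isd_ppmul {R : realType} {D I} {coord : I -> D -> R} {p b} :
  poly_fun coord p -> isd_fun coord b ->
  isd_fun coord (fun z => Num.max (p z) 0 * b z).
Proof.
move=> pp; elim=> {b} [q pq|f g _ If _ Ig|f g _ If _ Ig].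
- have pq' : poly_fun coord (fun z => - q z).
    apply: (poly_ext (fun z => (-1) * q z)); first by move=> z; rewrite mulN1r.
    by apply: PF_mul => //; apply: PF_const.
  eapply (isd_ext (isd_add (isd_pp_poly pp pq) (isd_opp (isd_pp_poly pp pq')))).
  move=> z /=; rewrite -mulrN -mulrDr; congr (_ * _).
  by mmcase; lra.
- eapply (isd_ext (ISD_min If Ig)); move=> z /=.
  by rewrite minr_pMr // le_max lexx orbT.
- eapply (isd_ext (ISD_max If Ig)); move=> z /=.
  by rewrite maxr_pMr // le_max lexx orbT.
Qed.

Lemma isd_posneg {R : realType} {D I} {coord : I -> D -> R} {f} :
  isd_fun coord f -> forall b, isd_fun coord b -> (forall z, 0 <= b z) ->
  isd_fun coord (fun z => Num.max (f z) 0 * b z) /\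
  isd_fun coord (fun z => Num.min (f z) 0 * b z).
Proof.
elim=> {f} [f pf|f g _ If _ Ig|f g _ If _ Ig] b Ib b0.
- split; first exact: isd_ppmul.
  have pf' : poly_fun coord (fun z => - f z).
    apply: (poly_ext (fun z => (-1) * f z)); first by move=> z; rewrite mulN1r.
    by apply: PF_mul => //; apply: PF_const.
  eapply (isd_ext (isd_opp (isd_ppmul pf' Ib))); move=> z /=.
  rewrite -mulNr; congr (_ * _).
  by mmcase; lra.
- have [Hf1 Hf2] := If b Ib b0; have [Hg1 Hg2] := Ig b Ib b0; split.
  + eapply (isd_ext (ISD_min Hf1 Hg1)); move=> z /=.
    rewrite -minr_pMl //; congr (_ * _).
    by mmcase; lra.
  + eapply (isd_ext (ISD_min Hf2 Hg2)); move=> z /=.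
    rewrite -minr_pMl //; congr (_ * _).
    by mmcase; lra.
- have [Hf1 Hf2] := If b Ib b0; have [Hg1 Hg2] := Ig b Ib b0; split.
  + eapply (isd_ext (ISD_max Hf1 Hg1)); move=> z /=.
    rewrite -maxr_pMl //; congr (_ * _).
    by mmcase; lra.
  + eapply (isd_ext (ISD_max Hf2 Hg2)); move=> z /=.
    rewrite -maxr_pMl //; congr (_ * _).
    by mmcase; lra.
Qed.

Lemma isd_mul {R : realType} {D I} {coord : I -> D -> R} {f g} :
  isd_fun coord f -> isd_fun coord g -> isd_fun coord (fun z => f z * g z).
Proof.
move=> If Ig.
have Igp : isd_fun coord (fun z => Num.max (g z) 0) := ISD_max Ig isd_const.
have Igm : isd_fun coord (fun z => Num.max (- g z) 0) := ISD_max (isd_opp Ig) isd_const.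
have gp0 : forall z, 0 <= Num.max (g z) 0 by move=> z; rewrite le_max lexx orbT.
have gm0 : forall z, 0 <= Num.max (- g z) 0 by move=> z; rewrite le_max lexx orbT.
have [A1 A2] := isd_posneg If _ Igp gp0.
have [B1 B2] := isd_posneg If _ Igm gm0.
eapply (isd_ext (isd_add (isd_add A1 A2) (isd_opp (isd_add B1 B2)))).
move=> z /=.
have ef : f z = Num.max (f z) 0 + Num.min (f z) 0.
  by mmcase; lra.
have eg : g z = Num.max (g z) 0 - Num.max (- g z) 0.
  by mmcase; lra.
by rewrite -!mulrDl -ef -mulrN -mulrDr -eg.
Qed.

Lemma poly_subst {R : realType} {D I} {coord : I -> D -> R} (h : D -> D) {f} :
  (forall i, poly_fun coord (fun z => coord i (h z))) ->
  poly_fun coord f -> poly_fun coord (fun z => f (h z)).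
Proof.
move=> Hh; elim=> {f} [c|i|f g _ If _ Ig|f g _ If _ Ig].
- exact: PF_const.
- exact: Hh.
- exact: PF_add.
- exact: PF_mul.
Qed.

Lemma isd_subst {R : realType} {D I} {coord : I -> D -> R} (h : D -> D) {f} :
  (forall i, poly_fun coord (fun z => coord i (h z))) ->
  isd_fun coord f -> isd_fun coord (fun z => f (h z)).
Proof.
move=> Hh; elim=> {f} [f pf|f g _ If _ Ig|f g _ If _ Ig].
- by apply: ISD_poly; apply: poly_subst.
- exact: ISD_min.
- exact: ISD_max.
Qed.

Lemma isd_sum {R : realType} {D I} {coord : I -> D -> R} {T : Type}
  (r : seq T) (P : pred T) (G : T -> D -> R) :
  (forall i, P i -> isd_fun coord (G i)) ->
  isd_fun coord (fun z => \sum_(i <- r | P i) G i z).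
Proof.
move=> H; elim: r => [|a r IH].
  by eapply (isd_ext isd_const); move=> z /=; rewrite big_nil.
case Pa: (P a).
  by eapply (isd_ext (isd_add (H a Pa) IH)); move=> z /=; rewrite big_cons Pa.
by eapply (isd_ext IH); move=> z /=; rewrite big_cons Pa.
Qed.

Lemma isd_prod {R : realType} {D I} {coord : I -> D -> R} {T : Type}
  (r : seq T) (P : pred T) (G : T -> D -> R) :
  (forall i, P i -> isd_fun coord (G i)) ->
  isd_fun coord (fun z => \prod_(i <- r | P i) G i z).
Proof.
move=> H; elim: r => [|a r IH].
  by eapply (isd_ext isd_const); move=> z /=; rewrite big_nil.
case Pa: (P a).
  by eapply (isd_ext (isd_mul (H a Pa) IH)); move=> z /=; rewrite big_cons Pa.
by eapply (isd_ext IH); move=> z /=; rewrite big_cons Pa.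
Qed.

Lemma isd_det {R : realType} {D I} {coord : I -> D -> R} {k : nat}
  (A : D -> 'M[R]_k) :
  (forall i j, isd_fun coord (fun z => A z i j)) ->
  isd_fun coord (fun z => \det (A z)).
Proof.
move=> H; rewrite /determinant.
eapply (isd_sum _ xpredT (fun (s : perm.perm_of (ordinal k)) z => (-1) ^+ perm.odd_perm s * \prod_i A z i (s i))).
move=> s _; apply: isd_mul; first exact: isd_const.
by eapply (isd_prod _ xpredT (fun i z => A z i (s i))).
Qed.

Definition tck {R : realType} (s0 s1 s2 sf : R) : R :=
  6 * (sf - s0) / (s2 - s1) ^+ 3.
Definition tcp {R : realType} (s0 s1 s2 sf : R) (s : R) : R :=
  s0 + tck s0 s1 s2 sf * ((s2 - s1) * (s - s1) ^+ 2 / 2 - (s - s1) ^+ 3 / 3).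
Definition tcg {R : realType} (s0 s1 s2 sf : R) (s : R) : R :=
  Num.max 0 (tck s0 s1 s2 sf * ((s - s1) * (s2 - s))).

Lemma tcp_deriv {R : realType} (s0 s1 s2 sf s : R) :
  is_derive s 1 (tcp s0 s1 s2 sf) (tck s0 s1 s2 sf * ((s - s1) * (s2 - s))).
Proof.
rewrite /tcp; apply: is_derive_eq.
by rewrite /GRing.scale /=; field.
Qed.

Section TC.
End TC.

Lemma tcp_cont {R : realType} (s0 s1 s2 sf : R) : continuous (tcp s0 s1 s2 sf).
Proof.
move=> s; have [d _] := tcp_deriv s0 s1 s2 sf s.
by apply: differentiable_continuous; apply/derivable1_diffP.
Qed.

Lemma tcp_s1 {R : realType} (s0 s1 s2 sf : R) : tcp s0 s1 s2 sf s1 = s0.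
Proof. rewrite /tcp subrr; set k := tck _ _ _ _; rewrite !expr0n /=; ring. Qed.

Lemma tcp_s2 {R : realType} {s1 s2 : R} (s0 sf : R) : s1 < s2 -> tcp s0 s1 s2 sf s2 = sf.
Proof.
move=> h; have hL : s2 - s1 != 0 by rewrite subr_eq0 gt_eqF.
rewrite /tcp /tck; field; exact: hL.
Qed.

Lemma tcp_lt {R : realType} {s0 s1 s2 sf a b : R} : s0 < sf -> s1 < s2 ->
  s1 <= a -> a < b -> b <= s2 -> tcp s0 s1 s2 sf a < tcp s0 s1 s2 sf b.
Proof.
move=> h0 h12 ha hab hb.
have kp : 0 < tck s0 s1 s2 sf.
  by rewrite /tck divr_gt0 ?mulr_gt0 ?exprn_gt0 ?subr_gt0.
rewrite /tcp ltrD2l ltr_pM2l //.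
set L := s2 - s1; set x := a - s1; set y := b - s1.
have hx : 0 <= x by rewrite /x subr_ge0.
have hxy : x < y by rewrite /x /y ltrD2r.
have hy : y <= L by rewrite /y /L lerD2r.
rewrite -subr_gt0.
have -> : L * y ^+ 2 / 2 - y ^+ 3 / 3 - (L * x ^+ 2 / 2 - x ^+ 3 / 3) =
   (y - x) * (3 * L * (x + y) - 2 * (x ^+ 2 + x * y + y ^+ 2)) / 6.
  by field.
apply: divr_gt0 => //; apply: mulr_gt0; first by rewrite subr_gt0.
nra.
Qed.

Lemma tck_gt0 {R : realType} {s0 s1 s2 sf : R} : s0 < sf -> s1 < s2 ->
  0 < tck s0 s1 s2 sf.
Proof. by move=> h0 h12; rewrite /tck divr_gt0 ?mulr_gt0 ?exprn_gt0 ?subr_gt0. Qed.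

Lemma tcp_le {R : realType} {s0 s1 s2 sf a b : R} : s0 < sf -> s1 < s2 ->
  s1 <= a -> a <= b -> b <= s2 -> tcp s0 s1 s2 sf a <= tcp s0 s1 s2 sf b.
Proof.
move=> h0 h12 ha; rewrite le_eqVlt => /orP[/eqP -> //|hab] hb.
by apply: ltW; apply: tcp_lt.
Qed.

Lemma tcp_bound1 {R : realType} (s0 s1 s2 sf h : R) : s0 < sf -> s1 < s2 ->
  0 <= h -> h <= s2 - s1 ->
  tcp s0 s1 s2 sf (s1 + h) - s0 <= tck s0 s1 s2 sf * (s2 - s1) / 2 * h ^+ 2.
Proof.
move=> h0 h12 hh hL; have kp := tck_gt0 h0 h12.
rewrite /tcp addrAC subrr add0r addrAC subrr add0r.
set k := tck _ _ _ _; set L := s2 - s1.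
rewrite -subr_ge0.
have -> : k * L / 2 * h ^+ 2 - k * (L * h ^+ 2 / 2 - h ^+ 3 / 3) = k * (h ^+ 3 / 3).
  by field.
by apply: mulr_ge0; [exact: ltW | apply: divr_ge0 => //; exact: exprn_ge0].
Qed.

Lemma tcp_bound2 {R : realType} (s0 s1 s2 sf h : R) : s0 < sf -> s1 < s2 ->
  0 <= h -> h <= s2 - s1 ->
  sf - tcp s0 s1 s2 sf (s2 - h) <= tck s0 s1 s2 sf * (s2 - s1) / 2 * h ^+ 2.
Proof.
move=> h0 h12 hh hL; have kp := tck_gt0 h0 h12.
have hLn : s2 - s1 != 0 by rewrite subr_eq0 gt_eqF.
rewrite -{1}(tcp_s2 s0 sf h12).
rewrite /tcp -subr_ge0.
set k := tck _ _ _ _.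
have -> : k * (s2 - s1) / 2 * h ^+ 2 - (s0 +
   k * ((s2 - s1) * (s2 - s1) ^+ 2 / 2 - (s2 - s1) ^+ 3 / 3) -
   (s0 + k * ((s2 - s1) * (s2 - h - s1) ^+ 2 / 2 - (s2 - h - s1) ^+ 3 / 3))) =
   k * (h ^+ 3 / 3).
  by field.
by apply: mulr_ge0; [exact: ltW | apply: divr_ge0 => //; exact: exprn_ge0].
Qed.

Lemma tcg_ge0 {R : realType} (s0 s1 s2 sf s : R) : 0 <= tcg s0 s1 s2 sf s.
Proof. by rewrite /tcg le_max lexx. Qed.

Lemma tcg_le {R : realType} (s0 s1 s2 sf s : R) : s0 < sf -> s1 < s2 ->
  tcg s0 s1 s2 sf s <= tck s0 s1 s2 sf * (s2 - s1) ^+ 2.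
Proof.
move=> h0 h12; have kp := tck_gt0 h0 h12.
rewrite /tcg ge_max; apply/andP; split.
  by apply: mulr_ge0; [exact: ltW | exact: sqr_ge0].
rewrite ler_pM2l //.
rewrite -subr_ge0.
have -> : (s2 - s1) ^+ 2 - (s - s1) * (s2 - s) =
   (s - (s1 + s2) / 2) ^+ 2 + 3 / 4 * (s2 - s1) ^+ 2 by field.
by rewrite addr_ge0 ?sqr_ge0 // mulr_ge0 ?sqr_ge0.
Qed.

Lemma tcg_out {R : realType} (s0 s1 s2 sf s : R) : s0 < sf -> s1 < s2 ->
  ~ (s1 < s < s2) -> tcg s0 s1 s2 sf s = 0.
Proof.
move=> h0 h12 hs; have kp := tck_gt0 h0 h12.
rewrite /tcg; apply/max_idPl; rewrite pmulr_rle0 //.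
case: (leP s s1) => hs1; first by nra.
have hs2 : s2 <= s by rewrite leNgt; apply/negP => h; apply: hs; rewrite hs1 h.
nra.
Qed.

Lemma tcg_in {R : realType} (s0 s1 s2 sf s : R) : s0 < sf -> s1 < s2 ->
  s1 < s < s2 -> tcg s0 s1 s2 sf s = tck s0 s1 s2 sf * ((s - s1) * (s2 - s)).
Proof.
move=> h0 h12 /andP[ha hb]; have kp := tck_gt0 h0 h12.
rewrite /tcg; apply/max_idPr; apply: mulr_ge0; first exact: ltW.
nra.
Qed.

Definition tcpsi {R : realType} (s0 s1 s2 sf : R) (u : R) : R :=
  match pselect (exists s, s1 <= s <= s2 /\ tcp s0 s1 s2 sf s = u) with
  | left e => sval (cid e)
  | right _ => s1 end.

Lemma tcpsi_in {R : realType} (s0 s1 s2 sf u : R) : s1 < s2 ->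
  s1 <= tcpsi s0 s1 s2 sf u <= s2.
Proof.
move=> h; rewrite /tcpsi; case: pselect => [e|_]; last by rewrite lexx ltW.
by have [hs _] := svalP (cid e).
Qed.

Lemma tcp_inj {R : realType} (s0 s1 s2 sf a b : R) : s0 < sf -> s1 < s2 ->
  s1 <= a <= s2 -> s1 <= b <= s2 -> tcp s0 s1 s2 sf a = tcp s0 s1 s2 sf b -> a = b.
Proof.
move=> h0 h12 /andP[a1 a2] /andP[b1 b2] e.
case: (ltgtP a b) => // hab.
  by have := tcp_lt h0 h12 a1 hab b2; rewrite e ltxx.
by have := tcp_lt h0 h12 b1 hab a2; rewrite e ltxx.
Qed.

Lemma tcpsi_tcp {R : realType} (s0 s1 s2 sf s : R) : s0 < sf -> s1 < s2 ->
  s1 <= s <= s2 -> tcpsi s0 s1 s2 sf (tcp s0 s1 s2 sf s) = s.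
Proof.
move=> h0 h12 hs; rewrite /tcpsi; case: pselect => [e|ne]; last first.
  by exfalso; apply: ne; exists s.
have [hs' e'] := svalP (cid e).
exact: tcp_inj h0 h12 hs' hs e'.
Qed.

Lemma tcp_tcpsi {R : realType} (s0 s1 s2 sf u : R) : s0 < sf -> s1 < s2 ->
  s0 <= u <= sf -> tcp s0 s1 s2 sf (tcpsi s0 s1 s2 sf u) = u.
Proof.
move=> h0 h12 hu; rewrite /tcpsi; case: pselect => [e|ne].
  by have [hs' e'] := svalP (cid e).
exfalso; apply: ne.
have [c hc ec] : exists2 c, c \in `[s1, s2]%R & tcp s0 s1 s2 sf c = u.
  apply: IVT; first exact: ltW.
    by apply: continuous_subspaceT; exact: tcp_cont.
  rewrite tcp_s1 tcp_s2 //.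
  by rewrite (min_idPl (ltW h0)) (max_idPr (ltW h0)).
by exists c; split => //; rewrite in_itv /= in hc.
Qed.

Lemma tcpsi_cont {R : realType} (s0 s1 s2 sf : R) : s0 < sf -> s1 < s2 ->
  {within `[s0, sf], continuous (tcpsi s0 s1 s2 sf)}.
Proof.
move=> h0 h12.
have := @segment_can_le_continuous R s1 s2 (tcp s0 s1 s2 sf) (tcpsi s0 s1 s2 sf) (ltW h12).
rewrite tcp_s1 tcp_s2 //; apply.
  by apply: continuous_subspaceT; exact: tcp_cont.
by move=> s; rewrite in_itv /= => hs; apply: tcpsi_tcp.
Qed.

Lemma tcpsi_oo {R : realType} (s0 s1 s2 sf u : R) : s0 < sf -> s1 < s2 ->
  s0 < u < sf -> s1 < tcpsi s0 s1 s2 sf u < s2.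
Proof.
move=> h0 h12 /andP[hu1 hu2].
have e : tcp s0 s1 s2 sf (tcpsi s0 s1 s2 sf u) = u.
  by apply: tcp_tcpsi => //; rewrite !ltW.
have /andP[a1 a2] := tcpsi_in s0 s1 s2 sf u h12.
rewrite !lt_neqAle a1 a2 !andbT; apply/andP; split; apply/eqP => ex.
  by move: e; rewrite -ex tcp_s1 => ex2; move: hu1; rewrite ex2 ltxx.
by move: e; rewrite ex tcp_s2 // => ex2; move: hu2; rewrite ex2 ltxx.
Qed.

Lemma tcpsi_deriv {R : realType} (s0 s1 s2 sf u : R) : s0 < sf -> s1 < s2 ->
  s0 < u < sf ->
  is_derive u 1 (tcpsi s0 s1 s2 sf) (tcg s0 s1 s2 sf (tcpsi s0 s1 s2 sf u))^-1.
Proof.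
move=> h0 h12 hu.
have hx := tcpsi_oo _ _ _ _ _ h0 h12 hu.
set x := tcpsi s0 s1 s2 sf u in hx *.
have e : tcp s0 s1 s2 sf x = u.
  by move: hu => /andP[hu1 hu2]; apply: tcp_tcpsi => //; rewrite ltW ?ltW.
rewrite tcg_in // -{1}e.
have kp := tck_gt0 h0 h12.
apply: is_derive_inverse.
- have Hn : \forall y \near x, y \in `]s1, s2[%R.
    by apply: near_in_itvoo; rewrite in_itv /=.
  apply: filterS Hn => y; rewrite in_itv /= => /andP[y1 y2].
  by apply: tcpsi_tcp; rewrite ?ltW.
- by near=> y; exact: tcp_cont.
- exact: tcp_deriv.
- move: hx => /andP[x1 x2].
  by rewrite mulf_neq0 ?gt_eqF // mulr_gt0 // subr_gt0.
Unshelve. all: by end_near. Qed.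

Lemma clamp_bound {R : realType} (c a : R) : 0 <= c -> `|clamp c a| <= c.
Proof. move=> hc; rewrite /clamp ler_norml; mmcase; lra. Qed.

Lemma clamp_sol_bound {R : realType} k (c : R) (M : 'M[R]_k) b i j :
  0 <= c -> `|clamp_sol c M b i j| <= c.
Proof.
move=> hc; rewrite /clamp_sol; case: ifP => _; last by rewrite mxE normr0.
by rewrite mxE; apply: clamp_bound.
Qed.

Lemma clamp_sol0 {R : realType} k (c : R) (M : 'M[R]_k) :
  0 <= c -> clamp_sol c M 0 = 0.
Proof.
move=> hc; rewrite /clamp_sol mulmx0; case: ifP => // _.
apply/matrixP => i j; rewrite !mxE /clamp; mmcase; lra.
Qed.

Lemma med_eq {R : realType} (c1 d w : R) : 0 <= c1 -> d != 0 ->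
  Num.min (Num.max w (- (c1 * Num.max d (- d)))) (c1 * Num.max d (- d)) =
  d * clamp c1 (d^-1 * w).
Proof.
move=> hc hd; set v := d^-1 * w.
have -> : w = d * v by rewrite /v mulrA divff // mul1r.
rewrite /clamp; case: (ltgtP d 0) => hd0; last by move: hd; rewrite hd0 eqxx.
- have -> : Num.max d (- d) = - d by apply/max_idPr; lra.
  mmcase; nra.
- have -> : Num.max d (- d) = d by apply/max_idPl; lra.
  mmcase; nra.
Qed.

Lemma scale_clamp {R : realType} (c1 K gg v : R) : 0 <= c1 -> 0 <= gg -> gg <= K ->
  clamp (c1 * K) (gg * clamp c1 v) = gg * clamp c1 v.
Proof.
move=> hc hg hK; have := clamp_bound c1 v hc; set C := clamp c1 v => hC.
rewrite ler_norml in hC; case/andP: hC => hC1 hC2.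
rewrite /clamp; mmcase; nra.
Qed.

Definition medcol {R : realType} {k} (c1 gg : R) (M : 'M[R]_k) (b : 'cV[R]_k) : 'cV[R]_k :=
  \col_i (gg * Num.min (Num.max ((\adj M *m b) i 0) (- (c1 * Num.max (\det M) (- \det M))))
                       (c1 * Num.max (\det M) (- \det M))).

Lemma CL {R : realType} k (c1 K gg : R) (M : 'M[R]_k) (b : 'cV[R]_k) :
  (0 < k)%N -> 0 <= c1 -> 0 <= gg -> gg <= K ->
  clamp_sol (c1 * K) ((\det M)%:M) (medcol c1 gg M b) = gg *: clamp_sol c1 M b.
Proof.
move=> hk hc hg hK; rewrite /clamp_sol.
have eu : (((\det M)%:M : 'M[R]_k) \in unitmx) = (M \in unitmx).
  by rewrite !unitmxE det_scalar !unitfE expf_eq0 hk.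
rewrite eu; case: ifP => hu; last by rewrite scaler0.
have hd : \det M != 0 by rewrite -unitfE -unitmxE.
rewrite invmx_scalar mul_scalar_mx /invmx hu -scalemxAl.
apply/matrixP => i j; rewrite !mxE (ord1 j) med_eq //.
by rewrite mulrCA mulKf // scale_clamp.
Qed.

Lemma cont_comp_within {R : realType} (A B : set R) (f q : R -> R) :
  {within A, continuous f} -> (forall x, B x -> A (q x)) ->
  {within B, continuous q} -> {within B, continuous (f \o q)}.
Proof.
move=> /subspace_continuousP cf hq /subspace_continuousP cq.
apply/subspace_continuousP => x Bx.
have cqA : q @ within B (nbhs x) --> within A (nbhs (q x)).
  move=> P /= hP.
  have := cq x Bx (fun y => A y -> P y) hP.
  rewrite /= /within /= => H.
  apply: (@filterS _ (nbhs x) _ (fun z => B z -> A (q z) -> P (q z))) H => z hz Bz; exact: hz Bz (hq z Bz).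
move=> P hP; exact: cqA _ (cf _ (hq _ Bx) _ hP).
Qed.

Lemma lip_bound {R : realType} (f df : R -> R) (a u C : R) : a <= u ->
  (forall x, x \in `]a, u[%R -> is_derive x 1 f (df x)) ->
  (forall x, x \in `]a, u[%R -> `|df x| <= C) ->
  {within `[a, u], continuous f} -> `|f u - f a| <= C * (u - a).
Proof.
move=> hau hd hb hc; case: (ltgtP a u) hau => // [hlt|->] _; last first.
  by rewrite !subrr normr0 mulr0.
have [c hcin ->] := MVT hlt hd hc.
have hp : 0 < u - a by rewrite subr_gt0.
by rewrite normrM (gtr0_norm hp) ler_pM2r // hb.
Qed.

Lemma deriv0_sq {R : realType} (f : R -> R) (x C d : R) : 0 < d ->
  (forall h, `|h| < d -> `|f (x + h) - f x| <= C * h ^+ 2) -> is_derive x 1 f 0.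
Proof.
move=> d0 hb.
have L : (fun h : R => h^-1 *: ((f \o shift x) (h *: 1) - f x)) @ 0^' --> (0 : R).
  apply/cvgrPdist_lt => e e0.
  have ep : 0 < e / (`|C| + 1) by rewrite divr_gt0 // ltr_pwDr.
  near=> h.
  have hn : h != 0 by near: h; exact: nbhs_dnbhs_neq.
  have h1 : `|h| < d by near: h; exact: (dnbhs0_lt d0).
  have h2 : `|h| < e / (`|C| + 1) by near: h; exact: (dnbhs0_lt ep).
  rewrite sub0r normrN /= /GRing.scale /= mulr1 addrC normrM normfV.
  have := hb h h1; set D := `|_| => hD.
  have hC : C * h ^+ 2 <= `|C| * `|h| ^+ 2.
    rewrite real_normK ?num_real //; apply: ler_wpM2r; [exact: sqr_ge0|exact: ler_norm].
  have hh : 0 < `|h| by rewrite normr_gt0.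
  have hD2 := le_trans hD hC.
  rewrite ltr_pdivlMr ?ltr_pwDr // in h2.
  rewrite (addrC h x) addrC -/D ltr_pdivrMl //.
  have := normr_ge0 C. nra.
apply: DeriveDef; first by apply/cvg_ex; exists 0.
exact: cvg_lim L.
Unshelve. all: by end_near. Qed.

Definition N2of {R : realType} {m n : nat} (N1 : net R m n) (c1 s0 s1 s2 sf : R) : net R m n :=
  fun x yt s => ((\det (N1 x yt (tcp s0 s1 s2 sf s)).1)%:M,
                 medcol c1 (tcg s0 s1 s2 sf s) (N1 x yt (tcp s0 s1 s2 sf s)).1
                                               (N1 x yt (tcp s0 s1 s2 sf s)).2).

Lemma KI {R : realType} {m n : nat} (N1 : net R m n) (c1 s0 s1 s2 sf : R) x y s :
  0 <= c1 -> s0 < sf -> s1 < s2 ->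
  clamp_sol (c1 * (tck s0 s1 s2 sf * (s2 - s1) ^+ 2))
     (N2of N1 c1 s0 s1 s2 sf x y s).1 (N2of N1 c1 s0 s1 s2 sf x y s).2 =
  tcg s0 s1 s2 sf s *: clamp_sol c1 (N1 x y (tcp s0 s1 s2 sf s)).1
                                     (N1 x y (tcp s0 s1 s2 sf s)).2.
Proof.
move=> hc h0 h12; rewrite /N2of /=.
apply: CL => //; [by rewrite addn1 | exact: tcg_ge0 | exact: tcg_le].
Qed.

Lemma N2_b0 {R : realType} {m n : nat} (N1 : net R m n) (c1 s0 s1 s2 sf : R) x y s :
  s0 < sf -> s1 < s2 -> ~ (s1 <= s <= s2) -> (N2of N1 c1 s0 s1 s2 sf x y s).2 = 0.
Proof.
move=> h0 h12 hs; rewrite /N2of /= /medcol tcg_out //.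
  by apply/matrixP => i j; rewrite !mxE mul0r.
by move=> /andP[a b]; apply: hs; rewrite !ltW.
Qed.

Lemma tcp_poly {R : realType} {D I} {coord : I -> D -> R} (t : D -> R) (s0 s1 s2 sf : R) :
  poly_fun coord t -> poly_fun coord (fun z => tcp s0 s1 s2 sf (t z)).
Proof.
move=> pt.
have pa : poly_fun coord (fun z => t z + (- s1)) by apply: PF_add => //; apply: PF_const.
apply: (poly_ext (fun z => s0 + tck s0 s1 s2 sf * (((s2 - s1) / 2) * ((t z + (- s1)) * (t z + (- s1)))
     + (- 1 / 3) * ((t z + (- s1)) * ((t z + (- s1)) * (t z + (- s1))))))).
  by move=> z; rewrite /tcp; ring.
apply: PF_add; first exact: PF_const.
apply: PF_mul; first exact: PF_const.
apply: PF_add; apply: PF_mul; try exact: PF_const; repeat apply: PF_mul => //.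
Qed.

Lemma N2_isd {R : realType} {m n : nat} (N1 : net R m n) (c1 s0 s1 s2 sf : R) :
  ISDnet N1 -> ISDnet (N2of N1 c1 s0 s1 s2 sf).
Proof.
move=> [HM HB].
pose h := fun z : net_dom R m n => (z.1, tcp s0 s1 s2 sf z.2).
have Hh : forall k, poly_fun (@net_coord R m n) (fun z => net_coord k (h z)).
  case=> [[i|j]|u].
  - exact: (PF_coord (@net_coord R m n) (inl (inl i))).
  - exact: (PF_coord (@net_coord R m n) (inl (inr j))).
  - apply: (tcp_poly (fun z : net_dom R m n => net_coord (inr u) z)).
    exact: (PF_coord (@net_coord R m n) (inr u)).
have HM' : forall i j, isd_fun (@net_coord R m n)
    (fun z => (N1 z.1.1 z.1.2 (tcp s0 s1 s2 sf z.2)).1 i j).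
  by move=> i j; exact: (isd_subst h Hh (HM i j)).
have HB' : forall i, isd_fun (@net_coord R m n)
    (fun z => (N1 z.1.1 z.1.2 (tcp s0 s1 s2 sf z.2)).2 i 0).
  by move=> i; exact: (isd_subst h Hh (HB i)).
have Hdet : isd_fun (@net_coord R m n)
    (fun z => \det (N1 z.1.1 z.1.2 (tcp s0 s1 s2 sf z.2)).1).
  exact: (isd_det (fun z => (N1 z.1.1 z.1.2 (tcp s0 s1 s2 sf z.2)).1)).
split.
  move=> i j; rewrite /N2of /=.
  case: (eqVneq i j) => [->|hij].
    by eapply (isd_ext Hdet); move=> z /=; rewrite !mxE eqxx mulr1n.
  by eapply (isd_ext isd_const); move=> z /=; rewrite !mxE (negbTE hij) mulr0n.
move=> i; rewrite /N2of /= /medcol.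
have Htcg : isd_fun (@net_coord R m n) (fun z => tcg s0 s1 s2 sf z.2).
  apply: ISD_max; first exact: isd_const.
  apply: ISD_poly; apply: PF_mul; first exact: PF_const.
  apply: PF_mul; apply: PF_add; try exact: PF_const.
  - exact: (PF_coord (@net_coord R m n) (inr tt)).
  - apply: (poly_ext (fun z => (-1) * net_coord (inr tt) z)); first by move=> z; rewrite mulN1r.
    apply: PF_mul; [exact: PF_const | exact: PF_coord].
have Had : isd_fun (@net_coord R m n)
    (fun z => Num.max (\det (N1 z.1.1 z.1.2 (tcp s0 s1 s2 sf z.2)).1)
                      (- \det (N1 z.1.1 z.1.2 (tcp s0 s1 s2 sf z.2)).1)).
  exact: ISD_max Hdet (isd_opp Hdet).
have Hw : isd_fun (@net_coord R m n)
    (fun z => (\adj (N1 z.1.1 z.1.2 (tcp s0 s1 s2 sf z.2)).1 *m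
                (N1 z.1.1 z.1.2 (tcp s0 s1 s2 sf z.2)).2) i 0).
  eapply isd_ext; last by move=> z; rewrite mxE.
  eapply (isd_sum _ xpredT (fun j z => (\adj (N1 z.1.1 z.1.2 (tcp s0 s1 s2 sf z.2)).1) i j *
                (N1 z.1.1 z.1.2 (tcp s0 s1 s2 sf z.2)).2 j 0)).
  move=> j _; apply: isd_mul; last exact: HB'.
  eapply isd_ext; last by move=> z; rewrite mxE.
  rewrite /cofactor.
  apply: isd_mul; first exact: isd_const.
  apply: (isd_det (fun z => row' j (col' i (N1 z.1.1 z.1.2 (tcp s0 s1 s2 sf z.2)).1))).
  by move=> a b; eapply (isd_ext (HM' (lift j a) (lift i b))); move=> z /=; rewrite !mxE.
eapply isd_ext; last by move=> z; rewrite mxE.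
apply: isd_mul; first exact: Htcg.
apply: ISD_min; last exact: isd_mul isd_const Had.
apply: ISD_max; first exact: Hw.
by apply: isd_opp; apply: isd_mul isd_const Had.
Qed.

Definition tcq {R : realType} (s0 s1 s2 sf s : R) : R :=
  tcp s0 s1 s2 sf (Num.min (Num.max s s1) s2).

Lemma tcq1 {R : realType} (s0 s1 s2 sf s : R) : s1 < s2 -> s <= s1 -> tcq s0 s1 s2 sf s = s0.
Proof.
move=> h12 hs; rewrite /tcq (max_idPr hs) (min_idPl (ltW h12)); exact: tcp_s1.
Qed.

Lemma tcq2 {R : realType} (s0 s1 s2 sf s : R) : s1 < s2 -> s2 <= s -> tcq s0 s1 s2 sf s = sf.
Proof.
move=> h12 hs; have hs1 : s1 <= s by apply: le_trans (ltW h12) hs.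
by rewrite /tcq (max_idPl hs1) (min_idPr hs) tcp_s2.
Qed.

Lemma tcq3 {R : realType} (s0 s1 s2 sf s : R) : s1 <= s <= s2 ->
  tcq s0 s1 s2 sf s = tcp s0 s1 s2 sf s.
Proof. by move=> /andP[a b]; rewrite /tcq (max_idPl a) (min_idPl b). Qed.

Lemma tcq_in {R : realType} (s0 s1 s2 sf s : R) : s0 < sf -> s1 < s2 ->
  s0 <= tcq s0 s1 s2 sf s <= sf.
Proof.
move=> h0 h12; rewrite /tcq.
set c := Num.min (Num.max s s1) s2.
have c1 : s1 <= c by rewrite /c le_min le_max lexx (ltW h12) orbT.
have c2 : c <= s2 by rewrite /c ge_min lexx orbT.
have A := tcp_le h0 h12 (lexx s1) c1 c2.
have B := tcp_le h0 h12 c1 c2 (lexx s2).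
rewrite tcp_s1 in A; rewrite tcp_s2 // in B.
by rewrite A B.
Qed.

Lemma tcq_cont {R : realType} (s0 s1 s2 sf : R) : continuous (tcq s0 s1 s2 sf).
Proof.
move=> s.
apply: (@continuous_comp _ _ _ ((id \max (cst s1)) \min (cst s2)) (tcp s0 s1 s2 sf)); last exact: tcp_cont.
apply: continuous_min; last exact: cst_continuous.
by apply: continuous_max; [exact: cvg_id|exact: cst_continuous].
Qed.

Lemma dirA {R : realType} {m n : nat} (N1 : net R m n) (c1 s0 s1 s2 sf : R) x z0 z :
  0 <= c1 -> s0 < s1 -> s1 < s2 -> s2 < sf ->
  ode_sol N1 c1 x z0 s0 sf z ->
  ode_sol (N2of N1 c1 s0 s1 s2 sf) (c1 * (tck s0 s1 s2 sf * (s2 - s1) ^+ 2)) x z0 s0 sf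
     (fun s => z (tcq s0 s1 s2 sf s)).
Proof.
move=> hc h01 h12 h2f [hz0 [hzc hzd]].
have h0f : s0 < sf by apply: lt_trans h01 (lt_trans h12 h2f).
have h1f : s1 < sf by apply: lt_trans h12 h2f.
have h02 : s0 < s2 by apply: lt_trans h01 h12.
have kp := tck_gt0 h0f h12.
split; first by rewrite tcq1 // ltW.
split.
  move=> i.
  have H := @cont_comp_within R _ _ (fun s => z s i 0) (tcq s0 s1 s2 sf) (hzc i).
  apply: H; first by move=> s _; exact: tcq_in.
  by apply: continuous_subspaceT; exact: tcq_cont.
have LA : forall i u, s0 <= u <= sf -> `|z u i 0 - z s0 i 0| <= c1 * (u - s0).
  move=> i u /andP[u0 uf].
  apply: (lip_bound (fun w => z w i 0) (fun w => clamp_sol c1 (N1 x (z w) w).1 (N1 x (z w) w).2 i 0) s0 u c1) => //.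
  - move=> w; rewrite in_itv /= => /andP[w0 wu]; apply: hzd.
    by rewrite w0 (lt_le_trans wu uf).
  - by move=> w _; exact: clamp_sol_bound.
  - apply: (continuous_subspaceW _ (hzc i)) => w /=; rewrite in_itv /= => /andP[w0 wu].
    by rewrite w0 (le_trans wu uf).
have LB : forall i u, s0 <= u <= sf -> `|z sf i 0 - z u i 0| <= c1 * (sf - u).
  move=> i u /andP[u0 uf].
  apply: (lip_bound (fun w => z w i 0) (fun w => clamp_sol c1 (N1 x (z w) w).1 (N1 x (z w) w).2 i 0) u sf c1) => //.
  - move=> w; rewrite in_itv /= => /andP[w0 wu]; apply: hzd.
    by rewrite wu (le_lt_trans u0 w0).
  - by move=> w _; exact: clamp_sol_bound.
  - apply: (continuous_subspaceW _ (hzc i)) => w /=; rewrite in_itv /= => /andP[w0 wu].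
    by rewrite wu (le_trans u0 w0).
move=> s /andP[hs0 hsf] i.
rewrite KI // ?ltW // mxE.
have Cnn : 0 <= c1 * (tck s0 s1 s2 sf * (s2 - s1) / 2).
  by apply: mulr_ge0 => //; apply: divr_ge0 => //; apply: mulr_ge0; rewrite ltW // subr_gt0.
case: (ltgtP s s1) => [hlt|hgt|->].
- rewrite tcg_out //; last by move=> /andP[a _]; move: a; rewrite ltNge ltW.
  rewrite mul0r.
  apply: (near_eq_is_derive _ (is_derive_cst (z s0 i 0) s 1)).
  have : \forall y \near s, y \in `]s0, s1[%R by apply: near_in_itvoo; rewrite in_itv /= hs0.
  apply: filterS => y; rewrite in_itv /= => /andP[_ hy].
  by rewrite /= tcq1 // ltW.
- case: (ltgtP s s2) => [hlt2|hgt2|->].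
  + rewrite tcg_in ?hgt //.
    have hs : s1 <= s <= s2 by rewrite !ltW.
    rewrite (tcq3 _ _ _ _ _ hs).
    apply: (near_eq_is_derive (f := (fun u => z u i 0) \o tcp s0 s1 s2 sf)).
      have : \forall y \near s, y \in `]s1, s2[%R by apply: near_in_itvoo; rewrite in_itv /= hgt.
      apply: filterS => y; rewrite in_itv /= => /andP[a b].
      by rewrite /= tcq3 // !ltW.
    rewrite mulrC; apply: is_derive1_comp; last exact: tcp_deriv.
    apply: hzd.
    have A := tcp_lt h0f h12 (lexx s1) hgt (ltW hlt2).
    have B := tcp_lt h0f h12 (ltW hgt) hlt2 (lexx s2).
    by rewrite tcp_s1 in A; rewrite tcp_s2 // in B; rewrite A B.
  + rewrite tcg_out //; last by move=> /andP[_ b]; move: b; rewrite ltNge ltW.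
    rewrite mul0r.
    apply: (near_eq_is_derive _ (is_derive_cst (z sf i 0) s 1)).
    have : \forall y \near s, y \in `]s2, sf[%R by apply: near_in_itvoo; rewrite in_itv /= hgt2.
    apply: filterS => y; rewrite in_itv /= => /andP[hy _].
    by rewrite /= tcq2 // ltW.
  + rewrite tcg_out //; last by move=> /andP[_ b]; move: b; rewrite ltxx.
    rewrite mul0r.
    apply: (deriv0_sq _ _ (c1 * (tck s0 s1 s2 sf * (s2 - s1) / 2)) (s2 - s1)).
      by rewrite subr_gt0.
    move=> h hh; rewrite /= (tcq2 _ _ _ _ _ h12 (lexx s2)).
    case: (leP 0 h) => hh0.
      rewrite tcq2 //; last by rewrite lerDl.
      by rewrite subrr normr0; apply: mulr_ge0 => //; exact: sqr_ge0.
    have hL : - h <= s2 - s1 by rewrite -(ltr0_norm hh0) ltW.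
    have hu : s1 <= s2 + h <= s2 by apply/andP; split; lra.
    rewrite tcq3 // distrC.
    have Hu := tcq_in s0 s1 s2 sf (s2 + h) h0f h12; rewrite tcq3 // in Hu.
    apply: le_trans (LB i _ Hu) _; rewrite -mulrA ler_wpM2l //.
    have hh1 : 0 <= - h by lra.
    have := tcp_bound2 s0 s1 s2 sf (- h) h0f h12 hh1 hL.
    by rewrite opprK sqrrN.
- rewrite tcg_out //; last by move=> /andP[a _]; move: a; rewrite ltxx.
  rewrite mul0r.
  apply: (deriv0_sq _ _ (c1 * (tck s0 s1 s2 sf * (s2 - s1) / 2)) (s2 - s1)).
    by rewrite subr_gt0.
  move=> h hh; rewrite /= (tcq1 _ _ _ _ _ h12 (lexx s1)).
  case: (leP h 0) => hh0.
    rewrite tcq1 //; last by rewrite gerDl.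
    by rewrite subrr normr0; apply: mulr_ge0 => //; exact: sqr_ge0.
  have hL : h <= s2 - s1 by rewrite ltW // -(gtr0_norm hh0).
  have hu : s1 <= s1 + h <= s2 by apply/andP; split; lra.
  rewrite tcq3 //.
  have Hu := tcq_in s0 s1 s2 sf (s1 + h) h0f h12; rewrite tcq3 // in Hu.
  apply: le_trans (LA i _ Hu) _; rewrite -mulrA ler_wpM2l //.
  exact: tcp_bound1 (ltW hh0) hL.
Qed.

Lemma dirB {R : realType} {m n : nat} (N1 : net R m n) (c1 s0 s1 s2 sf : R) x z0 z :
  0 <= c1 -> s0 < s1 -> s1 < s2 -> s2 < sf ->
  ode_sol (N2of N1 c1 s0 s1 s2 sf) (c1 * (tck s0 s1 s2 sf * (s2 - s1) ^+ 2)) x z0 s0 sf z ->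
  ode_sol N1 c1 x z0 s0 sf (fun u => z (tcpsi s0 s1 s2 sf u)) /\
  z (tcpsi s0 s1 s2 sf sf) = z sf.
Proof.
move=> hc h01 h12 h2f [hz0 [hzc hzd]].
have h0f : s0 < sf by apply: lt_trans h01 (lt_trans h12 h2f).
have h1f : s1 < sf by apply: lt_trans h12 h2f.
have h02 : s0 < s2 by apply: lt_trans h01 h12.
have kp := tck_gt0 h0f h12.
have Z : forall i a b, s0 <= a -> a <= b -> b <= sf ->
    (forall w, a < w < b -> tcg s0 s1 s2 sf w = 0) -> z b i 0 = z a i 0.
  move=> i a b ha hab hb hw; apply/eqP; rewrite -subr_eq0 -normr_le0.
  have := lip_bound (fun w => z w i 0) (fun _ => 0) a b 0 hab.
  rewrite mul0r; apply.
  - move=> w; rewrite in_itv /= => /andP[wa wb].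
    have hw' : s0 < w < sf by rewrite (le_lt_trans ha wa) (lt_le_trans wb hb).
    have hw0 : tcg s0 s1 s2 sf w = 0 by apply: hw; rewrite wa wb.
    by have := hzd w hw' i; rewrite KI // ?ltW // mxE hw0 mul0r.
  - by move=> w _; rewrite normr0.
  - apply: (continuous_subspaceW _ (hzc i)) => w /=; rewrite in_itv /= => /andP[w0 wu].
    by rewrite (le_trans ha w0) (le_trans wu hb).
have ps0 : tcpsi s0 s1 s2 sf s0 = s1.
  have := tcpsi_tcp s0 s1 s2 sf s1 h0f h12; rewrite tcp_s1; apply.
  by rewrite lexx ltW.
have psf : tcpsi s0 s1 s2 sf sf = s2.
  have := tcpsi_tcp s0 s1 s2 sf s2 h0f h12; rewrite tcp_s2 //; apply.
  by rewrite lexx ltW.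
have E1 : z s1 = z s0.
  apply/matrixP => i j; rewrite (ord1 j); apply: Z; [exact: lexx|exact: ltW|exact: ltW|].
  move=> w /andP[_ hw]; apply: tcg_out => // /andP[a _].
  by move: a; rewrite ltNge ltW.
have E2 : z sf = z s2.
  apply/matrixP => i j; rewrite (ord1 j); apply: Z; [exact: ltW|exact: ltW|exact: lexx|].
  move=> w /andP[hw _]; apply: tcg_out => // /andP[_ b].
  by move: b; rewrite ltNge ltW.
split; last by rewrite psf E2.
split; first by rewrite /= ps0 E1.
split.
  move=> i.
  have H := @cont_comp_within R _ _ (fun s => z s i 0) (tcpsi s0 s1 s2 sf) (hzc i).
  apply: H.
    move=> u _; have /andP[a b] := tcpsi_in s0 s1 s2 sf u h12.
    by rewrite /= (le_trans (ltW h01) a) (le_trans b (ltW h2f)).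
  by have := tcpsi_cont s0 s1 s2 sf h0f h12; rewrite set_itvcc.
move=> u hu i.
have hx := tcpsi_oo _ _ _ _ _ h0f h12 hu.
have hx' : s0 < tcpsi s0 s1 s2 sf u < sf.
  by move: hx => /andP[a b]; rewrite (lt_trans h01 a) (lt_trans b h2f).
have e : tcp s0 s1 s2 sf (tcpsi s0 s1 s2 sf u) = u.
  by move: hu => /andP[a b]; apply: tcp_tcpsi => //; rewrite !ltW.
have D1 := hzd _ hx' i; rewrite KI // ?ltW // mxE e in D1.
have D2 := tcpsi_deriv s0 s1 s2 sf u h0f h12 hu.
have := is_derive1_comp D1 D2.
have gp : tcg s0 s1 s2 sf (tcpsi s0 s1 s2 sf u) != 0.
  rewrite tcg_in //; move: hx => /andP[a b].
  by rewrite mulf_neq0 ?gt_eqF // mulr_gt0 // subr_gt0.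
by rewrite mulrC mulrA mulVf // mul1r.
Qed.

Theorem mainTheorem10 (R : realType) (m n : nat) (N1 : net R m n) (c1 : R)
  (y0 : 'cV[R]_n) (t0 s0 s1 s2 sfinal : R) :
  ISDnet N1 -> 0 <= c1 -> s0 < s1 -> s1 < s2 -> s2 < sfinal ->
  exists (N2 : net R m n) (c2 : R),
    [/\ ISDnet N2, 0 <= c2,
      (forall x : 'cV[R]_m,
        ODESolve N1 c1 x (col_mx y0 (t0%:M : 'cV[R]_1)) s0 sfinal =
        ODESolve N2 c2 x (col_mx y0 (t0%:M : 'cV[R]_1)) s0 sfinal) &
      (forall (x : 'cV[R]_m) (yt : 'cV[R]_(n + 1)) (s : R),
        ~ (s1 <= s <= s2) -> (N2 x yt s).2 = 0)].
Proof.
move=> HN hc h01 h12 h2f.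
have h0f : s0 < sfinal by apply: lt_trans h01 (lt_trans h12 h2f).
have kp := tck_gt0 h0f h12.
exists (N2of N1 c1 s0 s1 s2 sfinal), (c1 * (tck s0 s1 s2 sfinal * (s2 - s1) ^+ 2)).
split.
- exact: N2_isd.
- by apply: mulr_ge0 => //; apply: mulr_ge0; [exact: ltW | exact: sqr_ge0].
- move=> x; rewrite /ODESolve; apply/seteqP; split => v [z [hz hv]].
  + exists (fun s => z (tcq s0 s1 s2 sfinal s)); split; first exact: dirA.
    by rewrite tcq2 // ltW.
  + have [H1 H2] := dirB N1 c1 s0 s1 s2 sfinal x _ _ hc h01 h12 h2f hz.
    by exists (fun u => z (tcpsi s0 s1 s2 sfinal u)); split => //; rewrite H2.
- move=> x yt s hs; apply: N2_b0 => //.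
Qed.
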